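(* For real $\eta\ge0$ let $$w(\eta)=\frac{1}{8}\mathbb{I}+\frac{\eta}{4}\Big(V_{(AB)}-\tfrac{\mathbb{I}}{2}\Big)+\frac{\eta}{4}\Big(V_{(AC)}-\tfrac{\mathbb{I}}{2}\Big)+\frac{\eta}{4}\Big(V_{(BC)}-\tfrac{\mathbb{I}}{2}\Big)$$ on $(\mathbb{C}^2)^{\otimes3}$. Then $w(\eta)$ is local-positive if and only if $\eta\le\frac{2}{3}$. Moreover each bipartite reduction of $w(\eta)$ equals $(1-\eta)\frac{\mathbb{I}}{4}+\eta\frac{V}{2}$.
   Context: $V_{(XY)}$ swaps tensor factors $X,Y\in\{A,B,C\}$; $V$ is the swap on $\mathbb{C}^2\otimes\mathbb{C}^2$. An operator $M$ on $(\mathbb{C}^2)^{\otimes3}$ is local-positive if $\langle\psi_1\psi_2\psi_3|M|\psi_1\psi_2\psi_3\rangle\ge0$ for all unit vectors $\psi_i\in\mathbb{C}^2$. *)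

(* Defs.v *)
From HB Require Import structures.
From mathcomp Require Import all_boot all_order all_algebra.
Set Implicit Arguments. Unset Strict Implicit. Unset Printing Implicit Defensive.
Import Order.TTheory GRing.Theory Num.Theory.
Local Open Scope ring_scope.

(* Conventions: (C^2)^{(x)3} is identified with C^8 via the computational basis
   |a b c> <-> index 4a+2b+c (a = qubit A, b = qubit B, c = qubit C);
   C^2 (x) C^2 with C^4 via |x y> <-> 2x+y. *)

Definition bitA (k : 'I_8) : nat := (k %/ 4)%N.
Definition bitB (k : 'I_8) : nat := ((k %/ 2) %% 2)%N.
Definition bitC (k : 'I_8) : nat := (k %% 2)%N.
Definition bit1 (k : 'I_4) : nat := (k %/ 2)%N.
Definition bit2 (k : 'I_4) : nat := (k %% 2)%N.
Definition idx3 (a b c : nat) : 'I_8 := inord (4 * a + 2 * b + c)%N.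

Section Ops.
Variable C : numClosedFieldType.

Definition V_AB : 'M[C]_8 := \matrix_(i, j)
  ((bitA i == bitB j) && (bitB i == bitA j) && (bitC i == bitC j))%:R.
Definition V_AC : 'M[C]_8 := \matrix_(i, j)
  ((bitA i == bitC j) && (bitC i == bitA j) && (bitB i == bitB j))%:R.
Definition V_BC : 'M[C]_8 := \matrix_(i, j)
  ((bitB i == bitC j) && (bitC i == bitB j) && (bitA i == bitA j))%:R.

Definition V2 : 'M[C]_4 := \matrix_(i, j)
  ((bit1 i == bit2 j) && (bit2 i == bit1 j))%:R.

Definition prod3 (p1 p2 p3 : 'cV[C]_2) : 'cV[C]_8 :=
  \col_k (p1 (inord (bitA k)) 0 * p2 (inord (bitB k)) 0 * p3 (inord (bitC k)) 0).

Definition adj {m n} (A : 'M[C]_(m, n)) : 'M[C]_(n, m) := (map_mx (@Num.conj C) A)^T.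

Definition unit_vec (p : 'cV[C]_2) : Prop := (adj p *m p) 0 0 = 1.

Definition local_positive (M : 'M[C]_8) : Prop :=
  forall p1 p2 p3 : 'cV[C]_2, unit_vec p1 -> unit_vec p2 -> unit_vec p3 ->
    0 <= (adj (prod3 p1 p2 p3) *m M *m prod3 p1 p2 p3) 0 0.

Definition red_AB (M : 'M[C]_8) : 'M[C]_4 := \matrix_(i, j)
  \sum_(c < 2) M (idx3 (bit1 i) (bit2 i) c) (idx3 (bit1 j) (bit2 j) c).
Definition red_AC (M : 'M[C]_8) : 'M[C]_4 := \matrix_(i, j)
  \sum_(b < 2) M (idx3 (bit1 i) b (bit2 i)) (idx3 (bit1 j) b (bit2 j)).
Definition red_BC (M : 'M[C]_8) : 'M[C]_4 := \matrix_(i, j)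
  \sum_(a < 2) M (idx3 a (bit1 i) (bit2 i)) (idx3 a (bit1 j) (bit2 j)).

Definition w (eta : C) : 'M[C]_8 :=
  8^-1 *: 1%:M
  + (eta / 4) *: (V_AB - 2^-1 *: 1%:M)
  + (eta / 4) *: (V_AC - 2^-1 *: 1%:M)
  + (eta / 4) *: (V_BC - 2^-1 *: 1%:M).

End Ops.

(* Main.v *)
Set Warnings "-notation-overridden,-ambiguous-paths".
Require Import Defs.
From HB Require Import structures.
From mathcomp Require Import all_boot all_order all_algebra ring.
Import Order.TTheory GRing.Theory Num.Theory.
Local Open Scope ring_scope.

Ltac evb := repeat match goal with
 | |- context [idx3 ?a ?b ?c] =>
   let n := eval vm_compute in (4*a+2*b+c)%N in
   rewrite (_ : idx3 a b c = @Ordinal 8 n isT); [| apply/val_inj; rewrite /idx3 /= inordK; [reflexivity | reflexivity]]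
 | |- context [nat_of_bool ?b] =>
   lazymatch b with true => fail | false => fail | _ =>
   let v := eval vm_compute in b in
   lazymatch v with true => change b with true | false => change b with false end end
 | |- context [bitA ?t] => let v := eval vm_compute in (bitA t) in change (bitA t) with v
 | |- context [bitB ?t] => let v := eval vm_compute in (bitB t) in change (bitB t) with v
 | |- context [bitC ?t] => let v := eval vm_compute in (bitC t) in change (bitC t) with v
 | |- context [bit1 ?t] => let v := eval vm_compute in (bit1 t) in change (bit1 t) with v
 | |- context [bit2 ?t] => let v := eval vm_compute in (bit2 t) in change (bit2 t) with v
 end.

Ltac fin := rewrite /= ?mulr0n ?mulr1n ?mul0r ?mul1r ?add0r ?addr0.

Section S.
Variable C : numClosedFieldType.

Lemma VAB_prod (p1 p2 p3 : 'cV[C]_2) :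
  V_AB C *m prod3 p1 p2 p3 = prod3 p2 p1 p3.
Proof.
apply/matrixP => i k; rewrite !mxE !big_ord_recl big_ord0.
case: i => [[|[|[|[|[|[|[|[|//]]]]]]]] Hi]; rewrite !mxE; evb; fin; ring.
Qed.
Lemma VAC_prod (p1 p2 p3 : 'cV[C]_2) :
  V_AC C *m prod3 p1 p2 p3 = prod3 p3 p2 p1.
Proof.
apply/matrixP => i k; rewrite !mxE !big_ord_recl big_ord0.
case: i => [[|[|[|[|[|[|[|[|//]]]]]]]] Hi]; rewrite !mxE; evb; fin; ring.
Qed.
Lemma VBC_prod (p1 p2 p3 : 'cV[C]_2) :
  V_BC C *m prod3 p1 p2 p3 = prod3 p1 p3 p2.
Proof.
apply/matrixP => i k; rewrite !mxE !big_ord_recl big_ord0.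
case: i => [[|[|[|[|[|[|[|[|//]]]]]]]] Hi]; rewrite !mxE; evb; fin; ring.
Qed.

Definition ip (p q : 'cV[C]_2) := (adj p *m q) 0 0.

Lemma ipE p q : ip p q = (p (inord 0) 0)^* * q (inord 0) 0 + (p (inord 1) 0)^* * q (inord 1) 0.
Proof.
have e0 : (inord 0 : 'I_2) = 0 by apply/val_inj; rewrite /= inordK.
have e1 : (inord 1 : 'I_2) = 1 by apply/val_inj; rewrite /= inordK.
have e2 : lift ord0 ord0 = 1 :> 'I_2 by apply/val_inj.
have e3 : ord0 = 0 :> 'I_2 by apply/val_inj.
by rewrite e0 e1 /ip !mxE !big_ord_recl big_ord0 !mxE addr0 e2 e3.
Qed.

Lemma ip_prod p1 p2 p3 q1 q2 q3 :
  (adj (prod3 p1 p2 p3) *m prod3 q1 q2 q3) 0 0 = ip p1 q1 * ip p2 q2 * ip p3 q3.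
Proof.
rewrite !ipE !mxE !big_ord_recl big_ord0 !mxE; evb.
rewrite !rmorphM /=. ring.
Qed.


Lemma ip_prodM p1 p2 p3 q1 q2 q3 :
  adj (prod3 p1 p2 p3) *m prod3 q1 q2 q3 = (ip p1 q1 * ip p2 q2 * ip p3 q3)%:M.
Proof.
apply/matrixP => i j; rewrite !ord1 -ip_prod [RHS]mxE /= mulr1n //.
Qed.

Lemma Qform (eta : C) p1 p2 p3 : unit_vec p1 -> unit_vec p2 -> unit_vec p3 ->
  (adj (prod3 p1 p2 p3) *m w eta *m prod3 p1 p2 p3) 0 0 =
  8^-1 + eta / 4 * (ip p1 p2 * ip p2 p1 - 2^-1) + eta / 4 * (ip p1 p3 * ip p3 p1 - 2^-1)
  + eta / 4 * (ip p2 p3 * ip p3 p2 - 2^-1).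
Proof.
rewrite /unit_vec => h1 h2 h3.
rewrite /w -!mulmxA !(mulmxDl, mulmxBl, mulNmx, =^~scalemxAl, mul1mx) VAB_prod VAC_prod VBC_prod.
rewrite !mulmxDr -!scalemxAr !mulmxBr -!scalemxAr !ip_prodM !mxE /= !mulr1n.
rewrite -[(adj p1 *m p1) 0 0]/(ip p1 p1) -[(adj p2 *m p2) 0 0]/(ip p2 p2) -[(adj p3 *m p3) 0 0]/(ip p3 p3) in h1 h2 h3.
rewrite h1 h2 h3. ring.
Qed.

Definition Tf (x1 y1 x2 y2 x3 y3 : C) :=
  let a := x1^* * x1 + x2^* * x2 + x3^* * x3 in
  let d := y1^* * y1 + y2^* * y2 + y3^* * y3 in
  let z := x1 * y1^* + x2 * y2^* + x3 * y3^* in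
  (a - d) * (a - d)^* / 4 + z * z^*.

Lemma Tf_ge0 x1 y1 x2 y2 x3 y3 : 0 <= Tf x1 y1 x2 y2 x3 y3.
Proof.
rewrite /Tf; apply: addr_ge0; last exact: mul_conjC_ge0.
apply: divr_ge0; [exact: mul_conjC_ge0 | by rewrite ler0n].
Qed.

Lemma key x1 y1 x2 y2 x3 y3 :
  x1^* * x1 + y1^* * y1 = 1 -> x2^* * x2 + y2^* * y2 = 1 -> x3^* * x3 + y3^* * y3 = 1 ->
  (x1^* * x2 + y1^* * y2) * (x2^* * x1 + y2^* * y1)
  + (x1^* * x3 + y1^* * y3) * (x3^* * x1 + y3^* * y1)
  + (x2^* * x3 + y2^* * y3) * (x3^* * x2 + y3^* * y2)
  = 3/4 + Tf x1 y1 x2 y2 x3 y3.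
Proof.
move=> h1 h2 h3.
have E : 2 * ((x1^* * x2 + y1^* * y2) * (x2^* * x1 + y2^* * y1)
  + (x1^* * x3 + y1^* * y3) * (x3^* * x1 + y3^* * y1)
  + (x2^* * x3 + y2^* * y3) * (x3^* * x2 + y3^* * y2))
  = ((x1^* * x1 + y1^* * y1) + (x2^* * x2 + y2^* * y2) + (x3^* * x3 + y3^* * y3))^+2 / 2
    + 2 * Tf x1 y1 x2 y2 x3 y3
    - ((x1^* * x1 + y1^* * y1)^+2 + (x2^* * x2 + y2^* * y2)^+2 + (x3^* * x3 + y3^* * y3)^+2).
  rewrite /Tf /= !(rmorphD, rmorphM, rmorphB, rmorphN) /= !conjCK. field. by [].
rewrite h1 h2 h3 in E.
apply: (@mulfI _ 2); first by rewrite pnatr_eq0.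
rewrite E. field. by [].
Qed.

Lemma Qval (eta : C) p1 p2 p3 : unit_vec p1 -> unit_vec p2 -> unit_vec p3 ->
  (adj (prod3 p1 p2 p3) *m w eta *m prod3 p1 p2 p3) 0 0 =
  (2 - 3 * eta) / 16 + eta / 4 * Tf (p1 (inord 0) 0) (p1 (inord 1) 0)
     (p2 (inord 0) 0) (p2 (inord 1) 0) (p3 (inord 0) 0) (p3 (inord 1) 0).
Proof.
move=> h1 h2 h3; rewrite Qform //.
move: h1 h2 h3; rewrite /unit_vec -/(ip p1 p1) -/(ip p2 p2) -/(ip p3 p3) !ipE => h1 h2 h3.
have K := key _ _ _ _ _ _ h1 h2 h3.
have -> : forall a b c : C, 8^-1 + eta / 4 * (a - 2^-1) + eta / 4 * (b - 2^-1) + eta / 4 * (c - 2^-1)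
   = 8^-1 + eta/4 * (a + b + c) - 3 * eta / 8 by move=> a b c; field.
rewrite K. field. by [].
Qed.


Lemma redAB (eta : C) : red_AB (w eta) = (1 - eta) / 4 *: (1%:M : 'M[C]_4) + eta / 2 *: V2 C.
Proof.
apply/matrixP => i j; rewrite /w !mxE !big_ord_recl big_ord0 !mxE;
  case: i => [[|[|[|[|//]]]] Hi]; case: j => [[|[|[|[|//]]]] Hj]; evb; fin; field; done.
Qed.
Lemma redAC (eta : C) : red_AC (w eta) = (1 - eta) / 4 *: (1%:M : 'M[C]_4) + eta / 2 *: V2 C.
Proof.
apply/matrixP => i j; rewrite /w !mxE !big_ord_recl big_ord0 !mxE;
  case: i => [[|[|[|[|//]]]] Hi]; case: j => [[|[|[|[|//]]]] Hj]; evb; fin; field; done.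
Qed.
Lemma redBC (eta : C) : red_BC (w eta) = (1 - eta) / 4 *: (1%:M : 'M[C]_4) + eta / 2 *: V2 C.
Proof.
apply/matrixP => i j; rewrite /w !mxE !big_ord_recl big_ord0 !mxE;
  case: i => [[|[|[|[|//]]]] Hi]; case: j => [[|[|[|[|//]]]] Hj]; evb; fin; field; done.
Qed.

Definition vec (a b : C) : 'cV[C]_2 := \col_i (if (i : nat) == 0%N then a else b).

Lemma ip_vec a b c d : ip (vec a b) (vec c d) = a^* * c + b^* * d.
Proof. by rewrite ipE !mxE !inordK. Qed.
End S.
Arguments vec {C}. Arguments ip {C}.

Theorem mainTheorem13 (C : numClosedFieldType) (eta : C) (heta : 0 <= eta) :
  (local_positive (w eta) <-> eta <= 2 / 3) /\
  (let target := (1 - eta) / 4 *: (1%:M : 'M[C]_4) + eta / 2 *: V2 C in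
   [/\ red_AB (w eta) = target, red_AC (w eta) = target & red_BC (w eta) = target]).
Proof.
split; last by cbv zeta; split; [apply: redAB | apply: redAC | apply: redBC].
split.
- move=> LP.
  pose s := sqrtC (3 : C).
  have hs : s^* = s by apply: conj_Creal; rewrite ger0_real // sqrtC_ge0 ler0n.
  have h2 : (2^-1 : C)^* = 2^-1 by apply: conj_Creal; rewrite realV realn.
  have ss : s * s = 3 by rewrite -expr2 sqrtCK.
  have u1 : unit_vec (vec (1:C) 0) by change (ip (vec (1:C) 0) (vec (1:C) 0) = 1); rewrite ip_vec rmorph1 rmorph0; ring.
  have u2 : unit_vec (vec 2^-1 (s/2)) by change (ip (vec 2^-1 (s/2)) (vec 2^-1 (s/2)) = 1); rewrite ip_vec rmorphM /= hs h2 (mulrC s) mulrACA ss; field.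
  have u3 : unit_vec (vec 2^-1 (-(s/2))) by change (ip (vec 2^-1 (-(s/2))) (vec 2^-1 (-(s/2))) = 1); rewrite ip_vec rmorphN rmorphM /= hs h2 mulrNN (mulrC s) mulrACA ss; field.
  have := LP _ _ _ u1 u2 u3.
  rewrite Qform // !ip_vec !(rmorphN, rmorphM, rmorph1, rmorph0) /= hs h2.
  set E := (X in 0 <= X -> _).
  have -> : E = (2 - 3 * eta) / 16 + eta / 64 * (s * s + 1) * (s * s - 3).
    by rewrite /E; field.
  rewrite ss subrr mulr0 addr0 pmulr_lge0 ?invr_gt0 ?ltr0n // subr_ge0 => H.
  by rewrite ler_pdivlMr ?ltr0n // mulrC.
- move=> le p1 p2 p3 u1 u2 u3; rewrite Qval //.
  apply: addr_ge0; last by apply: mulr_ge0; [apply: divr_ge0; rewrite // ler0n | apply: Tf_ge0].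
  apply: divr_ge0; last by rewrite ler0n.
  by rewrite subr_ge0 mulrC -ler_pdivlMr ?ltr0n.
Qed.
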